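(* On the category $\mathrm{Top}$ of topological spaces the Grothendieck topologies $T_{nop},T_{op},T_{slh},T_{sutsu},T_{sop},T_{lsplit},T_{sur}$ satisfy: $T_{nop}\subset T_{op}$; $T_{op}\prec T_{slh}$ and $T_{op}\sim T_{slh}$; $T_{slh}\subset T_{sutsu}$ and $T_{slh}\sim T_{sutsu}$; $T_{sutsu}\subset T_{lsplit}$ and $T_{sutsu}\sim T_{lsplit}$; $T_{lsplit}\subset T_{sur}$; $T_{sutsu}\subset T_{sop}\subset T_{sur}$. Moreover, each of these topologies is either singleton or singletonizable, $T_{op}$ is superextensive, and all of them except $T_{sur}$ are subcanonical and local.
   Context: Coverings of the Grothendieck topologies on $\mathrm{Top}$: $T_{op}$ — families $(\pi_i:U_i\hookrightarrow X)$ of topological embeddings whose images form an open cover of $X$; $T_{nop}$ — as $T_{op}$ but the open cover is numerable (admits a subordinate partition of unity); $T_{slh}$ — single surjective local homeomorphisms; $T_{sutsu}$ — single surjective continuous $f:X\to Y$ such that each $x\in X$ has an open neighbourhood $U$ of $f(x)$ with a section $\sigma:U\to X$, $\sigma(f(x))=x$; $T_{sop}$ — single surjective open maps; $T_{lsplit}$ — single continuous $f:X\to Y$ such that each $y\in Y$ has an open neighbourhood with a continuous section; $T_{sur}$ — single surjective continuous maps. A Grothendieck topology is singleton if all coverings consist of one morphism, singletonizable if for each covering $(U_i\to X)_i$ the coproduct $\coprod U_i$ exists. On an extensive category (such as $\mathrm{Top}$), $T$ is superextensive if every family of coproduct injections $(X_i\to\coprod_iX_i)$ of an existing coproduct is a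 $T$-covering. A morphism is universal if its pullback along every morphism exists; $\pi:Y\to X$ is $T$-locally split if there is a $T$-covering $(\pi_i:U_i\to X)$ and $\rho_i:U_i\to Y$ with $\pi\circ\rho_i=\pi_i$. $T_1\prec T_2$: every universal $T_1$-locally split morphism is $T_2$-locally split; $\sim$: $\prec$ both ways; $T_1\subset T_2$: every $T_1$-covering is a $T_2$-covering. A universally effective epimorphism is a universal morphism $\pi:Y\to X$ for which $Y\times_XY\rightrightarrows Y\to X$ is a coequalizer and all of whose pullbacks have the same property; the canonical topology consists of these (as singleton coverings); $T$ is subcanonical if $T\prec$ canonical topology. $T$ is local if whenever in a pullback square $V\to Y$, $f:V\to U$, $g:U\to X$, $\pi:Y\to X$ the maps $f$ and $g$ are universal $T$-locally split, then $\pi$ is universal $T$-locally split. *)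

(* Defs.v *)
(* the category Top is modelled by
   objects  = MathComp-Analysis [topologicalType]s,
   morphisms = continuous functions between their carriers. *)
From HB Require Import structures.
From mathcomp Require Import all_boot all_order all_algebra.
From mathcomp Require Import all_classical all_reals all_analysis.
From mathcomp Require Import Rstruct Rstruct_topology.

Set Implicit Arguments.
Unset Strict Implicit.
Unset Printing Implicit Defensive.

Import GRing.Theory Num.Theory.
Local Open Scope classical_set_scope.
Local Open Scope ring_scope.

Record cov_family (X : topologicalType) := Family {
  fam_idx : Type;
  fam_obj : fam_idx -> topologicalType;
  fam_map : forall i, fam_obj i -> X }.
Arguments fam_idx {X} f : rename.
Arguments fam_obj {X} f i : rename.
Arguments fam_map {X} f i _ : rename.

Definition topology_on_Top := forall X : topologicalType, cov_family X -> Prop.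

Definition single_with (X : topologicalType) (F : cov_family X)
  (P : forall U : topologicalType, (U -> X) -> Prop) : Prop :=
  exists i0 : fam_idx F, (forall i, i = i0) /\ P (fam_obj F i0) (fam_map F i0).

Definition single (X : topologicalType) (F : cov_family X) : Prop :=
  exists i0 : fam_idx F, forall i, i = i0.

Definition surj (X Y : topologicalType) (f : X -> Y) : Prop :=
  forall y, exists x, f x = y.

Definition embedding (U X : topologicalType) (f : U -> X) : Prop :=
  [/\ continuous f, injective f &
      forall A : set U, open A -> exists B : set X, open B /\ A = f @^-1` B].

Definition T_op : topology_on_Top := fun X F =>
  [/\ forall i, embedding (fam_map F i),
      forall i, open (range (fam_map F i)) &
      forall x : X, exists i, range (fam_map F i) x].

(* the cover (V_i)_{i in I} of X admits a subordinate (locally finite)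
   partition of unity *)
Definition numerable (X : topologicalType) (I : Type) (V : I -> set X) : Prop :=
  exists (J : Type) (phi : J -> X -> Rdefinitions.R),
  [/\ forall j, continuous (phi j),
      forall j x, 0 <= phi j x <= 1,
      forall j, exists i, closure [set x | phi j x != 0] `<=` V i,
      forall x : X, exists N : set X, nbhs x N /\
         exists s : seq J, forall j, ~ List.In j s ->
            N `&` closure [set y | phi j y != 0] = set0 &
      forall x : X, exists s : seq J,
         [/\ List.NoDup s, (forall j, phi j x != 0 -> List.In j s) &
             \sum_(j <- s) phi j x = 1]].

Definition T_nop : topology_on_Top := fun X F =>
  T_op F /\ numerable (fun i => range (fam_map F i)).

Definition local_homeo (U X : topologicalType) (f : U -> X) : Prop :=
  continuous f /\
  forall u : U, exists W : set U,
    [/\ open W, W u, open (f @` W) &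
        exists g : X -> U, [/\ {within f @` W, continuous g},
             forall w, W w -> g (f w) = w &
             forall x, (f @` W) x -> f (g x) = x]].

Definition T_slh : topology_on_Top := fun X F =>
  single_with F (fun U f => surj f /\ local_homeo f).

Definition sutsu (U X : topologicalType) (f : U -> X) : Prop :=
  [/\ continuous f, surj f &
      forall u : U, exists W : set X, [/\ open W, W (f u) &
        exists sigma : X -> U, [/\ {within W, continuous sigma},
           forall x, W x -> f (sigma x) = x & sigma (f u) = u]]].

Definition T_sutsu : topology_on_Top := fun X F => single_with F (fun U f => sutsu f).

Definition T_sop : topology_on_Top := fun X F =>
  single_with F (fun U f =>
    [/\ continuous f, surj f & forall A : set U, open A -> open (f @` A)]).

Definition T_lsplit : topology_on_Top := fun X F =>
  single_with F (fun U f =>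
    continuous f /\
    forall x : X, exists W : set X, [/\ open W, W x &
       exists sigma : X -> U, {within W, continuous sigma} /\
          forall x', W x' -> f (sigma x') = x']).

Definition T_sur : topology_on_Top := fun X F =>
  single_with F (fun U f => continuous f /\ surj f).

Definition is_pullback (Z Y X P : topologicalType) (f : Z -> X) (pi : Y -> X)
  (p1 : P -> Z) (p2 : P -> Y) : Prop :=
  [/\ continuous p1, continuous p2, f \o p1 = pi \o p2 &
      forall (W : topologicalType) (a : W -> Z) (b : W -> Y),
        continuous a -> continuous b -> f \o a = pi \o b ->
        exists h : W -> P, [/\ continuous h, p1 \o h = a, p2 \o h = b &
          forall h' : W -> P, continuous h' -> p1 \o h' = a -> p2 \o h' = b ->
            h' = h]].

Definition universal (Y X : topologicalType) (pi : Y -> X) : Prop :=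
  forall (Z : topologicalType) (f : Z -> X), continuous f ->
  exists (P : topologicalType) (p1 : P -> Z) (p2 : P -> Y), is_pullback f pi p1 p2.

Definition locally_split (T : topology_on_Top) (Y X : topologicalType)
  (pi : Y -> X) : Prop :=
  exists F : cov_family X, T X F /\
  exists rho : forall i, fam_obj F i -> Y,
    forall i, continuous (rho i) /\ pi \o rho i = fam_map F i.

Definition subtop (T1 T2 : topology_on_Top) : Prop :=
  forall (X : topologicalType) (F : cov_family X), T1 X F -> T2 X F.

Definition prec (T1 T2 : topology_on_Top) : Prop :=
  forall (X Y : topologicalType) (pi : Y -> X), continuous pi ->
    universal pi -> locally_split T1 pi -> locally_split T2 pi.

Definition simtop (T1 T2 : topology_on_Top) : Prop := prec T1 T2 /\ prec T2 T1.

Definition is_coequalizer (P Y X : topologicalType) (p1 p2 : P -> Y) (q : Y -> X)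
  : Prop :=
  [/\ continuous q, q \o p1 = q \o p2 &
      forall (W : topologicalType) (g : Y -> W), continuous g -> g \o p1 = g \o p2 ->
        exists h : X -> W, [/\ continuous h, h \o q = g &
          forall h' : X -> W, continuous h' -> h' \o q = g -> h' = h]].

Definition effective_epi (Y X : topologicalType) (pi : Y -> X) : Prop :=
  forall (P : topologicalType) (p1 p2 : P -> Y),
    is_pullback pi pi p1 p2 -> is_coequalizer p1 p2 pi.

Definition univ_eff_epi (Y X : topologicalType) (pi : Y -> X) : Prop :=
  [/\ continuous pi, universal pi, effective_epi pi &
      forall (Z P : topologicalType) (f : Z -> X) (p1 : P -> Z) (p2 : P -> Y),
        continuous f -> is_pullback f pi p1 p2 -> effective_epi p1].

Definition T_can : topology_on_Top := fun X F => single_with F (fun U f => univ_eff_epi f).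

Definition subcanonical (T : topology_on_Top) : Prop := prec T T_can.

Definition singleton_top (T : topology_on_Top) : Prop :=
  forall (X : topologicalType) (F : cov_family X), T X F -> single F.

Definition is_coproduct (I : Type) (U : I -> topologicalType) (C : topologicalType)
  (iota : forall i, U i -> C) : Prop :=
  (forall i, continuous (iota i)) /\
  forall (W : topologicalType) (g : forall i, U i -> W), (forall i, continuous (g i)) ->
    exists h : C -> W, [/\ continuous h, forall i, h \o iota i = g i &
      forall h' : C -> W, continuous h' -> (forall i, h' \o iota i = g i) -> h' = h].

Arguments is_coproduct {I} U C iota.

Definition singletonizable (T : topology_on_Top) : Prop :=
  forall (X : topologicalType) (F : cov_family X), T X F ->
    exists (C : topologicalType) (iota : forall i, fam_obj F i -> C),
      is_coproduct (fam_obj F) C iota.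

Definition superextensive (T : topology_on_Top) : Prop :=
  forall (I : Type) (U : I -> topologicalType) (C : topologicalType)
         (iota : forall i, U i -> C),
    is_coproduct U C iota -> T C (@Family C I U iota).

Definition local_top (T : topology_on_Top) : Prop :=
  forall (X Y U V : topologicalType) (pi : Y -> X) (g : U -> X)
         (f : V -> U) (q : V -> Y),
    continuous pi -> continuous g -> is_pullback g pi f q ->
    universal f -> locally_split T f ->
    universal g -> locally_split T g ->
    universal pi /\ locally_split T pi.

(* Main.v *)
Require Import Defs.
From HB Require Import structures.
From mathcomp Require Import all_boot all_order all_algebra.
From mathcomp Require Import all_classical all_reals all_analysis.
From mathcomp Require Import Rstruct Rstruct_topology.
From Stdlib Require Import Eqdep.

Set Implicit Arguments.
Unset Strict Implicit.
Unset Printing Implicit Defensive.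

Import GRing.Theory Num.Theory.
Local Open Scope classical_set_scope.
Local Open Scope ring_scope.
Lemma sv_cont (X : topologicalType) (A : set X) : continuous (set_val : A -> X).
Proof. exact: initial_continuous. Qed.

Lemma sv_open (X : topologicalType) (A : set X) (V : set A) :
  open V -> exists2 B, open B & V = set_val @^-1` B.
Proof. by move=> [B oB <-]; exists B. Qed.

Lemma sv_inj (X : topologicalType) (A : set X) : injective (set_val : A -> X).
Proof. by rewrite set_valE; exact: val_inj. Qed.

Lemma range_sv (X : topologicalType) (A : set X) : range (set_val : A -> X) = A.
Proof.
rewrite set_valE; apply/seteqP; split => [x [v _ <-]|x Ax]; first exact: set_valP.
by exists (exist _ x (mem_set Ax)).
Qed.

Lemma into_sv_cont (Z X : topologicalType) (A : set X) (h : Z -> A) :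
  continuous (set_val \o h) -> continuous h.
Proof.
move=> ch; apply/continuousP => V [B oB <-].
by move/continuousP: ch => /(_ B oB).
Qed.

Lemma in_sv (X Y : topologicalType) (A : set X) (s : X -> Y) :
  open A -> {in A, continuous s} -> continuous (s \o (set_val : A -> X)).
Proof.
move=> oA cs; apply/subspace_sigL_continuousP.
by rewrite continuous_open_subspace.
Qed.

Lemma fst_cont (Z Y : topologicalType) : continuous (@fst Z Y).
Proof. by move=> p; exact: cvg_fst. Qed.

Lemma snd_cont (Z Y : topologicalType) : continuous (@snd Z Y).
Proof. by move=> p; exact: cvg_snd. Qed.

Lemma pair_cont (W Z Y : topologicalType) (a : W -> Z) (b : W -> Y) :
  continuous a -> continuous b -> continuous (fun w => (a w, b w)).
Proof. by move=> ca cb w; apply: cvg_pair; [exact: ca|exact: cb]. Qed.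

Definition pbset (Z Y X : topologicalType) (f : Z -> X) (g : Y -> X) : set (Z * Y) :=
  [set p | f p.1 = g p.2].
Definition PB (Z Y X : topologicalType) (f : Z -> X) (g : Y -> X) : topologicalType :=
  pbset f g.
Definition pb1 (Z Y X : topologicalType) (f : Z -> X) (g : Y -> X) : PB f g -> Z :=
  fun p => (set_val p).1.
Definition pb2 (Z Y X : topologicalType) (f : Z -> X) (g : Y -> X) : PB f g -> Y :=
  fun p => (set_val p).2.

Arguments pb1 {Z Y X} f g p.
Arguments pb2 {Z Y X} f g p.
Arguments PB {Z Y X} f g.

Lemma pb1_cont (Z Y X : topologicalType) (f : Z -> X) (g : Y -> X) : continuous (pb1 f g).
Proof. move=> p; apply: continuous_comp; [exact: sv_cont | exact: fst_cont]. Qed.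

Lemma pb2_cont (Z Y X : topologicalType) (f : Z -> X) (g : Y -> X) : continuous (pb2 f g).
Proof. move=> p; apply: continuous_comp; [exact: sv_cont | exact: snd_cont]. Qed.

Lemma pb_eq (Z Y X : topologicalType) (f : Z -> X) (g : Y -> X) (p : PB f g) : f (pb1 f g p) = g (pb2 f g p).
Proof. exact: (set_valP p). Qed.

Definition pb_mk (Z Y X : topologicalType) (f : Z -> X) (g : Y -> X) z y (e : f z = g y) : PB f g :=
  exist _ (z, y) (mem_set (e : pbset f g (z, y))).

Lemma pb_mk1 (Z Y X : topologicalType) (f : Z -> X) (g : Y -> X) z y (e : f z = g y) :
  pb1 f g (pb_mk e) = z.
Proof. by rewrite /pb1 set_valE. Qed.
Lemma pb_mk2 (Z Y X : topologicalType) (f : Z -> X) (g : Y -> X) z y (e : f z = g y) :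
  pb2 f g (pb_mk e) = y.
Proof. by rewrite /pb2 set_valE. Qed.

Lemma pb_ext (Z Y X : topologicalType) (f : Z -> X) (g : Y -> X) (p q : PB f g) :
  pb1 f g p = pb1 f g q -> pb2 f g p = pb2 f g q -> p = q.
Proof.
move=> e1 e2; apply: sv_inj; move: e1 e2; rewrite /pb1 /pb2.
by case: (set_val p) => ? ?; case: (set_val q) => ? ? /= -> ->.
Qed.

Lemma PB_pullback (Z Y X : topologicalType) (f : Z -> X) (g : Y -> X) :
  is_pullback f g (pb1 f g) (pb2 f g).
Proof.
split; [exact: pb1_cont|exact: pb2_cont| |].
  by apply/funext => p; exact: pb_eq.
move=> W a b ca cb e.
have e' w : f (a w) = g (b w) by exact: (congr1 (fun F => F w) e).
exists (fun w => pb_mk (e' w)); split.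
- apply: into_sv_cont; rewrite set_valE /=.
  exact: pair_cont.
- by apply/funext => w /=; rewrite pb_mk1.
- by apply/funext => w /=; rewrite pb_mk2.
- move=> h' _ e1 e2; apply/funext => w; apply: pb_ext.
    by rewrite pb_mk1 -e1.
  by rewrite pb_mk2 -e2.
Qed.

Lemma all_universal (Y X : topologicalType) (pi : Y -> X) : universal pi.
Proof. by move=> Z f _; exists (PB f pi), (pb1 f pi), (pb2 f pi); exact: PB_pullback. Qed.
Definition Sig (I : Type) (U : I -> topologicalType) : topologicalType :=
  {i : {classic I} & U i}.
Definition sinj (I : Type) (U : I -> topologicalType) (i : I) : U i -> Sig U :=
  existT (fun i : {classic I} => U i) i.

Arguments sinj {I} U i.

Lemma sinj_cont (I : Type) (U : I -> topologicalType) (i : I) : continuous (sinj U i).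
Proof. exact: (@existT_continuous {classic I} U i). Qed.

Lemma sinj_open (I : Type) (U : I -> topologicalType) (i : I) (A : set (U i)) :
  open A -> open (sinj U i @` A).
Proof. exact: (@existT_open_map {classic I} U i). Qed.

Lemma sinj_inj (I : Type) (U : I -> topologicalType) (i : I) : injective (sinj U i).
Proof. by move=> a b e; exact: (inj_pair2 _ _ _ _ _ e). Qed.

Definition scase (I : Type) (U : I -> topologicalType) (W : Type) (g : forall i, U i -> W) :
  Sig U -> W := fun p => g (projT1 p) (projT2 p).

Lemma scase_cont (I : Type) (U : I -> topologicalType) (W : topologicalType)
  (g : forall i, U i -> W) : (forall i, continuous (g i)) -> continuous (scase g).
Proof. exact: (@sigT_continuous {classic I} U W g). Qed.

Lemma Sig_coproduct (I : Type) (U : I -> topologicalType) :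
  is_coproduct U (Sig U) (sinj U).
Proof.
split; first exact: sinj_cont.
move=> W g cg; exists (scase g); split; first exact: scase_cont.
  by move=> i; apply/funext.
move=> h' _ e; apply/funext => -[i x].
exact: (congr1 (fun F => F x) (e i)).
Qed.

Definition fam1 (X U : topologicalType) (f : U -> X) : cov_family X :=
  @Family X unit (fun _ => U) (fun _ => f).

Lemma fam1_single_with (X U : topologicalType) (f : U -> X)
  (P : forall U : topologicalType, (U -> X) -> Prop) :
  P U f -> single_with (fam1 f) P.
Proof. by move=> Pf; exists tt; split => // -[]. Qed.

Lemma ls_fam1 (T : topology_on_Top) (X Y U : topologicalType) (pi : Y -> X)
  (f : U -> X) (rho : U -> Y) :
  T X (fam1 f) -> continuous rho -> pi \o rho = f -> locally_split T pi.
Proof. by move=> TF cr e; exists (fam1 f); split => //; exists (fun _ => rho). Qed.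

Lemma ls_single (P : forall (X U : topologicalType), (U -> X) -> Prop)
  (X Y : topologicalType) (pi : Y -> X) :
  locally_split (fun X F => single_with F (P X)) pi ->
  exists (U : topologicalType) (f : U -> X) (rho : U -> Y),
    [/\ P X U f, continuous rho & pi \o rho = f].
Proof.
move=> [F [[i0 [_ Pi0]] [rho /(_ i0) [cr e]]]].
by exists (fam_obj F i0), (fam_map F i0), (rho i0).
Qed.

Lemma single_with_mono (X : topologicalType) (F : cov_family X)
  (P Q : forall U : topologicalType, (U -> X) -> Prop) :
  (forall U f, P U f -> Q U f) -> single_with F P -> single_with F Q.
Proof. by move=> PQ [i0 [h Pi]]; exists i0; split => //; exact: PQ. Qed.

Lemma ls_sub (T1 T2 : topology_on_Top) (X Y : topologicalType) (pi : Y -> X) :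
  subtop T1 T2 -> locally_split T1 pi -> locally_split T2 pi.
Proof. by move=> s [F [TF r]]; exists F; split => //; exact: s. Qed.

Lemma sub_nop_op : subtop T_nop T_op.
Proof. by move=> X F []. Qed.

Lemma sub_slh_sutsu : subtop T_slh T_sutsu.
Proof.
move=> X F; apply: single_with_mono => U f [sf [cf lh]]; split => // u.
have [W [oW Wu oWf [g [cg gK fK]]]] := lh u.
exists (f @` W); split; [done|by exists u|].
by exists g; split => //; exact: gK.
Qed.

Lemma sub_sutsu_lsplit : subtop T_sutsu T_lsplit.
Proof.
move=> X F; apply: single_with_mono => U f [cf sf sec]; split => // x.
have [u <-] := sf x.
have [W [oW Wfu [s [cs sK _]]]] := sec u.
by exists W; split => //; exists s.
Qed.

Lemma sub_lsplit_sur : subtop T_lsplit T_sur.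
Proof.
move=> X F; apply: single_with_mono => U f [cf sec]; split => // x.
have [W [oW Wx [s [_ sK]]]] := sec x.
by exists (s x); exact: sK.
Qed.

Lemma sub_sop_sur : subtop T_sop T_sur.
Proof. by move=> X F; apply: single_with_mono => U f []. Qed.

Lemma sub_sutsu_sop : subtop T_sutsu T_sop.
Proof.
move=> X F; apply: single_with_mono => U f [cf sf sec]; split => // A oA.
rewrite openE => _ [u Au <-].
have [W [oW Wfu [s [cs sK su]]]] := sec u.
move: cs; rewrite continuous_open_subspace // => cs.
have cu : {for f u, continuous s} by apply: cs; rewrite inE.
have nA : nbhs (s (f u)) A by rewrite su; apply: open_nbhs_nbhs.
have nW : nbhs (f u) W by apply: open_nbhs_nbhs.
have h1 : nbhs (f u) (s @^-1` A) := cu _ nA.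
have h2 : nbhs (f u) (s @^-1` A `&` W) by apply: filterI.
rewrite /interior; apply: filterS h2 => y [/= sA Wy].
by exists (s y) => //; exact: sK.
Qed.
Definition LS (X Y : topologicalType) (pi : Y -> X) : Prop :=
  forall x, exists (W : set X) (s : X -> Y),
    [/\ open W, W x, {in W, continuous s} & forall x', W x' -> pi (s x') = x'].

Lemma id_cont (X : topologicalType) : continuous (@id X).
Proof. by move=> x; exact: cvg_id. Qed.

Lemma LS_of_lsplit (X Y : topologicalType) (pi : Y -> X) :
  locally_split T_lsplit pi -> LS pi.
Proof.
move=> [F [[i0 [_ [cf sec]]] [rho /(_ i0) [cr e]]]] x.
have [W [oW Wx [s [cs sK]]]] := sec x.
exists W, (rho i0 \o s); split => //.
  move: cs; rewrite continuous_open_subspace // => cs y Wy.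
  by apply: continuous_comp; [exact: cs | exact: cr].
move=> x' Wx'; have := congr1 (fun F => F (s x')) e => /= ->.
exact: sK.
Qed.

Lemma lsplit_of_LS (X Y : topologicalType) (pi : Y -> X) :
  continuous pi -> LS pi -> locally_split T_lsplit pi.
Proof.
move=> cpi h; apply: (@ls_fam1 _ _ _ _ pi pi id) => //; last exact: id_cont.
apply: fam1_single_with; split => // x.
have [W [s [oW Wx cs sK]]] := h x.
by exists W; split => //; exists s; split => //; rewrite continuous_open_subspace.
Qed.

Definition ND (X Y : topologicalType) (pi : Y -> X) (I : Type) (V : I -> set X)
  (s : I -> X -> Y) : Prop :=
  [/\ forall i, open (V i), forall x, exists i, V i x,
      forall i, {in V i, continuous (s i)} & forall i x, V i x -> pi (s i x) = x].

Definition famV (X : topologicalType) (I : Type) (V : I -> set X) : cov_family X :=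
  @Family X I (fun i => (V i : topologicalType)) (fun i => set_val).

Lemma famV_range (X : topologicalType) (I : Type) (V : I -> set X) (i : I) :
  range (fam_map (famV V) i) = V i.
Proof. exact: range_sv. Qed.

Lemma famV_op (X : topologicalType) (I : Type) (V : I -> set X) :
  (forall i, open (V i)) -> (forall x, exists i, V i x) -> T_op (famV V).
Proof.
move=> oV cV; split => [i|i|x] /=.
- split; [exact: sv_cont|exact: sv_inj|].
  by move=> A /sv_open [B oB ->]; exists B.
- by change (open (range (set_val : V i -> X))); rewrite range_sv.
- have [i Vi] := cV x; exists i.
  by change (range (set_val : V i -> X) x); rewrite range_sv.
Qed.

Lemma famV_ls (X Y : topologicalType) (pi : Y -> X) (I : Type) (V : I -> set X)
  (s : I -> X -> Y) : ND pi V s -> locally_split T_op pi.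
Proof.
move=> [oV cV cs sK]; exists (famV V); split; first exact: famV_op.
exists (fun i => s i \o set_val) => i; split; first exact: in_sv.
apply/funext => v /=; apply: sK; exact: set_valP.
Qed.

Lemma LS_of_ND (X Y : topologicalType) (pi : Y -> X) (I : Type) (V : I -> set X)
  (s : I -> X -> Y) : ND pi V s -> LS pi.
Proof.
move=> [oV cV cs sK] x; have [i Vi] := cV x.
by exists (V i), (s i); split => //; exact: sK.
Qed.

Lemma ND_of_LS (X Y : topologicalType) (pi : Y -> X) :
  LS pi -> exists (V : X -> set X) (s : X -> X -> Y), ND pi V s.
Proof.
move=> h.
have /choice [p hp] : forall x, exists p : set X * (X -> Y), [/\ open p.1, p.1 x,
    {in p.1, continuous p.2} & forall x', p.1 x' -> pi (p.2 x') = x'].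
  by move=> x; have [W [s H]] := h x; exists (W, s).
exists (fun x => (p x).1), (fun x => (p x).2); split.
- by move=> x; case: (hp x).
- by move=> x; exists x; case: (hp x).
- by move=> x; case: (hp x).
- by move=> i x; case: (hp i) => _ _ _; apply.
Qed.

Lemma op_of_LS (X Y : topologicalType) (pi : Y -> X) :
  LS pi -> locally_split T_op pi.
Proof. by move=> /ND_of_LS [V [s h]]; exact: famV_ls h. Qed.
Lemma normalize_op (X Y : topologicalType) (pi : Y -> X) (F : cov_family X)
  (rho : forall i, fam_obj F i -> Y) :
  T_op F -> (forall i, continuous (rho i) /\ pi \o rho i = fam_map F i) ->
  exists s, ND pi (fun i => range (fam_map F i)) s.
Proof.
move=> [emb opn cov] hr.
have [d _] : exists d : X -> Y, True.
  have /choice [d _] : forall x : X, exists y : Y, True.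
    by move=> x; have [i [a _ _]] := cov x; exists (rho i a).
  by exists d.
have /choice [s hs] : forall i, exists s : X -> Y, forall a, s (fam_map F i a) = rho i a.
  move=> i.
  have /choice [s hs] : forall x, exists y : Y, forall a, fam_map F i a = x -> y = rho i a.
    move=> x; case: (pselect (exists a, fam_map F i a = x)) => [[a ea]|na].
      exists (rho i a) => a' ea'; have [_ inj _] := emb i.
      by rewrite (inj a' a) // ea ea'.
    by exists (d x) => a ea; exfalso; apply: na; exists a.
  by exists s => a; exact: hs.
exists s; split.
- by move=> i; exact: opn.
- by move=> x; exact: cov.
- move=> i x; rewrite inE => -[a _ <-].
  have [ce inj op] := emb i; have [cr _] := hr i.
  move=> N; rewrite hs => nN.
  have : nbhs a (rho i @^-1` N) := cr a N nN.
  rewrite nbhsE => -[B' [oB' B'a] sB'].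
  have [B [oB eB]] := op B' oB'.
  have nB : nbhs (fam_map F i a) (B `&` range (fam_map F i)).
    apply: open_nbhs_nbhs; split; first exact: openI.
    by split; [rewrite eB in B'a; exact: B'a | exists a].
  apply: filterS nB => y [By [a' _ ea']].
  rewrite -ea' in By *; rewrite /= hs; apply: sB'.
  by rewrite eB; exact: By.
- move=> i x [a _ <-]; rewrite hs; have [_ e] := hr i.
  exact: (congr1 (fun F => F a) e).
Qed.

Lemma LS_of_op (X Y : topologicalType) (pi : Y -> X) :
  locally_split T_op pi -> LS pi.
Proof.
move=> [F [TF [rho hr]]]; have [s hs] := normalize_op TF hr.
exact: LS_of_ND hs.
Qed.

Lemma slh_of_ND (X Y : topologicalType) (pi : Y -> X) (I : Type) (V : I -> set X)
  (s : I -> X -> Y) : ND pi V s -> locally_split T_slh pi.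
Proof.
move=> [oV cV cs sK].
pose U := fun i => (V i : topologicalType).
pose c : Sig U -> X := scase (fun i (v : U i) => set_val v).
pose r : Sig U -> Y := scase (fun i (v : U i) => s i (set_val v)).
apply: (@ls_fam1 _ _ _ _ pi c r).
- apply: fam1_single_with; split.
  + move=> x; have [i Vi] := cV x; exists (sinj U i (exist _ x (mem_set Vi))).
    by rewrite /c /scase /= set_valE.
  + split; first by apply: scase_cont => i; exact: sv_cont.
    case=> i v.
    have cW : c @` range (sinj U i) = V i.
      apply/seteqP; split => [_ [_ [w _ <-] <-]|x Vx].
        by rewrite /c /scase /=; exact: set_valP.
      exists (sinj U i (exist _ x (mem_set Vx))); first by exists (exist _ x (mem_set Vx)).
      by rewrite /c /scase /= set_valE.
    pose g := fun x => match pselect (V i x) with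
      | left p => sinj U i (exist _ x (mem_set p)) | right _ => sinj U i v end.
    have gE (w : U i) : g (set_val w) = sinj U i w.
      rewrite /g; case: pselect => [p|np]; last by exfalso; apply: np; exact: set_valP.
      by congr (sinj U i _); apply: sv_inj; rewrite {1}set_valE.
    exists (range (sinj U i)); split.
    * exact: sinj_open openT.
    * by exists v.
    * by rewrite cW.
    * exists g; rewrite cW; split.
      -- apply/subspace_sigL_continuousP.
         rewrite (_ : sigL (V i) g = sinj U i); first exact: (@sinj_cont I U i).
         by apply/funext => w; rewrite /sigL /=; exact: gE.
      -- by move=> w [w' _ <-]; rewrite /c /scase /= gE.
      -- move=> x Vx; rewrite /g; case: pselect => [p|//].
         by rewrite /c /scase /= set_valE.
- by apply: scase_cont => i; exact: in_sv.
- apply/funext => -[i v]; rewrite /r /c /scase /=; apply: sK; exact: set_valP.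
Qed.

Lemma slh_of_LS (X Y : topologicalType) (pi : Y -> X) :
  LS pi -> locally_split T_slh pi.
Proof. by move=> /ND_of_LS [V [s h]]; exact: slh_of_ND h. Qed.

Lemma slh_of_op (X Y : topologicalType) (pi : Y -> X) :
  locally_split T_op pi -> locally_split T_slh pi.
Proof. by move=> /LS_of_op; exact: slh_of_LS. Qed.

Lemma LS_of_sutsu (X Y : topologicalType) (pi : Y -> X) :
  locally_split T_sutsu pi -> LS pi.
Proof. by move=> h; apply: LS_of_lsplit; exact: ls_sub sub_sutsu_lsplit h. Qed.

Lemma LS_of_slh (X Y : topologicalType) (pi : Y -> X) :
  locally_split T_slh pi -> LS pi.
Proof. by move=> h; apply: LS_of_sutsu; exact: ls_sub sub_slh_sutsu h. Qed.

Lemma sutsu_of_LS (X Y : topologicalType) (pi : Y -> X) :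
  LS pi -> locally_split T_sutsu pi.
Proof. by move=> h; apply: ls_sub sub_slh_sutsu _; exact: slh_of_LS. Qed.
Definition quot (Y X : topologicalType) (p : Y -> X) : Prop :=
  forall A : set X, open (p @^-1` A) -> open A.

Definition opensurj (U X : topologicalType) (a : U -> X) : Prop :=
  [/\ continuous a, Defs.surj a & forall A, open A -> open (a @` A)].

Lemma eff_of_quot (Y X : topologicalType) (pi : Y -> X) :
  continuous pi -> Defs.surj pi -> quot pi -> effective_epi pi.
Proof.
move=> cpi spi qpi P p1 p2 [c1 c2 e univ]; split => //.
move=> W g cg eg.
have /choice [sec hsec] : forall x, exists y, pi y = x := spi.
have key y : g (sec (pi y)) = g y.
  have ee : pi \o (fun _ : Y => sec (pi y)) = pi \o (fun _ : Y => y).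
    by apply/funext => w /=; exact: hsec.
  have [m [_ m1 m2 _]] := univ Y (fun _ => sec (pi y)) (fun _ => y) (@cst_continuous Y Y (sec (pi y))) (@cst_continuous Y Y y) ee.
  have h1 := congr1 (fun H => H y) m1; have h2 := congr1 (fun H => H y) m2.
  have h3 := congr1 (fun H => H (m y)) eg.
  simpl in h1, h2, h3.
  by rewrite -h1 h3 h2.
exists (g \o sec); split.
- apply/continuousP => O oO; apply: qpi.
  rewrite (_ : pi @^-1` ((g \o sec) @^-1` O) = g @^-1` O).
    by move/continuousP: cg; apply.
  by apply/seteqP; split => y /=; rewrite key.
- by apply/funext => y /=; exact: key.
- move=> h' _ eh; apply/funext => x /=; rewrite -{1}(hsec x).
  exact: (congr1 (fun H => H (sec x)) eh).
Qed.

Lemma quot_of_factor (U Y X : topologicalType) (a : U -> X) (m : U -> Y) (p : Y -> X) :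
  opensurj a -> continuous m -> p \o m = a -> Defs.surj p /\ quot p.
Proof.
move=> [ca sa oa] cm e.
have eu u : p (m u) = a u := congr1 (fun H => H u) e.
split.
  by move=> x; have [u <-] := sa x; exists (m u); exact: eu.
move=> A oA.
have -> : A = a @` (m @^-1` (p @^-1` A)).
  apply/seteqP; split => [x Ax|_ [u Au <-]].
    by have [u eux] := sa x; exists u => //=; rewrite eu eux.
  by move: Au; rewrite /= eu.
by apply: oa; move/continuousP: cm; apply.
Qed.

Lemma opensurj_comp (A B C : topologicalType) (a : A -> B) (b : B -> C) :
  opensurj a -> opensurj b -> opensurj (b \o a).
Proof.
move=> [ca sa oa] [cb sb ob]; split.
- by move=> x; apply: continuous_comp; [exact: ca|exact: cb].
- by move=> z; have [y <-] := sb z; have [x <-] := sa y; exists x.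
- move=> S oS; rewrite (_ : (b \o a) @` S = b @` (a @` S)); first by apply: ob; exact: oa.
  by rewrite image_comp.
Qed.

Lemma pb1_opensurj (Z U X : topologicalType) (f : Z -> X) (a : U -> X) :
  continuous f -> opensurj a -> opensurj (pb1 f a).
Proof.
move=> cf [ca sa oa]; split; first exact: pb1_cont.
  by move=> z; have [u eu] := sa (f z); exists (pb_mk (esym eu)); exact: pb_mk1.
move=> V /sv_open [B oB ->].
rewrite openE => z [p Bp <-]; rewrite /interior.
have nB : nbhs (set_val p) B by apply: open_nbhs_nbhs.
case: nB => -[P Q] /= [nP nQ] sPQ.
have oaQ : open (a @` Q°) by apply: oa; exact: open_interior.
have nf : nbhs (pb1 f a p) (f @^-1` (a @` Q°)).
  apply: cf; apply: open_nbhs_nbhs; split => //.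
  exists (pb2 f a p); first exact: nQ.
  by rewrite pb_eq.
have nPf : nbhs (pb1 f a p) (P `&` f @^-1` (a @` Q°)) by apply: filterI.
apply: filterS nPf => z' [Pz' [u' Qu' eu']].
exists (pb_mk (esym eu')); last exact: pb_mk1.
rewrite /= set_valE /=; apply: sPQ; split => //.
exact: interior_subset.
Qed.

Lemma uee_of_sop (X Y : topologicalType) (pi : Y -> X) :
  continuous pi -> locally_split T_sop pi -> univ_eff_epi pi.
Proof.
move=> cpi [F [[i0 [_ [ca sa oa]]] [rho /(_ i0) [cr e]]]].
have osa : opensurj (fam_map F i0) by split.
split => //; first exact: all_universal.
  have [spi qpi] := quot_of_factor osa cr e.
  exact: eff_of_quot.
move=> Z P f p1 p2 cf pb.
have [c1 c2 e12 univ] := pb.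
have osb := pb1_opensurj cf osa.
have crp : continuous (rho i0 \o pb2 f (fam_map F i0)).
  by move=> q; apply: continuous_comp; [exact: pb2_cont|exact: cr].
have ee : f \o pb1 f (fam_map F i0) = pi \o (rho i0 \o pb2 f (fam_map F i0)).
  apply/funext => q /=; rewrite pb_eq.
  by have := congr1 (fun H => H (pb2 f (fam_map F i0) q)) e.
have [m [cm m1 m2 _]] := univ _ _ _ (@pb1_cont _ _ _ _ _) crp ee.
have [sp qp] := quot_of_factor osb cm m1.
exact: eff_of_quot.
Qed.

Lemma subcan_of (T : topology_on_Top) :
  (forall (X Y : topologicalType) (pi : Y -> X), continuous pi ->
     locally_split T pi -> locally_split T_sop pi) -> subcanonical T.
Proof.
move=> h X Y pi cpi _ lT.
apply: (@ls_fam1 _ _ _ _ pi pi id); last by [].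
  by apply: fam1_single_with; apply: uee_of_sop => //; exact: h.
exact: id_cont.
Qed.

Lemma local_sop : local_top T_sop.
Proof.
move=> X Y U V pi g f q cpi cg pb uf lf ug lg.
split; first exact: all_universal.
have [cf cq e _] := pb.
move: lf => [F [[i0 [_ [cb sb ob]]] [rf /(_ i0) [crf ef]]]].
move: lg => [G [[j0 [_ [ca sa oa]]] [rg /(_ j0) [crg eg]]]].
have osb : opensurj (fam_map F i0) by split.
have osa : opensurj (fam_map G j0) by split.
have ose := pb1_opensurj crg osb.
apply: (@ls_fam1 _ _ _ _ pi (fam_map G j0 \o pb1 (rg j0) (fam_map F i0))
          (q \o rf i0 \o pb2 (rg j0) (fam_map F i0))).
- apply: fam1_single_with.
  by have [] := opensurj_comp ose osa; split.
- move=> w; apply: continuous_comp; first exact: pb2_cont.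
  by apply: continuous_comp; [exact: crf|exact: cq].
- apply/funext => w /=.
  have h1 := congr1 (fun H => H (rf i0 (pb2 (rg j0) (fam_map F i0) w))) e.
  have h2 := congr1 (fun H => H (pb2 (rg j0) (fam_map F i0) w)) ef.
  have h3 := congr1 (fun H => H (pb1 (rg j0) (fam_map F i0) w)) eg.
  simpl in h1, h2, h3.
  by rewrite -h1 h2 -pb_eq h3.
Qed.
Lemma LS_local (X Y U V : topologicalType) (pi : Y -> X) (g : U -> X) (f : V -> U)
  (q : V -> Y) : is_pullback g pi f q -> LS f -> LS g -> LS pi.
Proof.
move=> [cf cq e _] lf lg x.
have [W [s [oW Wx cs sK]]] := lg x.
have [W' [t [oW' W'sx ct tK]]] := lf (s x).
exists (W `&` s @^-1` W'), (q \o t \o s); split.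
- exact: (proj1 (continuous_inP s oW) cs W' oW').
- by split.
- move=> y; rewrite inE => -[Wy W'sy].
  apply: continuous_comp; first by apply: cs; rewrite inE.
  by apply: continuous_comp; [apply: ct; rewrite inE | exact: cq].
- move=> y [Wy W'sy] /=.
  have := congr1 (fun H => H (t (s y))) e => /= <-.
  by rewrite tK // sK.
Qed.

Lemma local_of_LS (T : topology_on_Top) :
  (forall (X Y : topologicalType) (pi : Y -> X), locally_split T pi -> LS pi) ->
  (forall (X Y : topologicalType) (pi : Y -> X), continuous pi -> LS pi ->
     locally_split T pi) -> local_top T.
Proof.
move=> toLS ofLS X Y U V pi g f q cpi cg pb _ lf _ lg; split; first exact: all_universal.
by apply: ofLS => //; exact: LS_local pb (toLS _ _ _ lf) (toLS _ _ _ lg).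
Qed.

Lemma superext_op : superextensive T_op.
Proof.
move=> I U C iota [ci univC].
have [ci' univS] := Sig_coproduct U.
have [h [ch hi _]] := univC (Sig U) (sinj U) ci'.
have [k [ck ki _]] := univS C iota ci.
have hiP i a : h (iota i a) = sinj U i a := congr1 (fun H => H a) (hi i).
have kiP i a : k (sinj U i a) = iota i a := congr1 (fun H => H a) (ki i).
have hk x : k (h x) = x.
  have [h0 [_ _ u0]] := univC C iota ci.
  have e1 : k \o h = h0.
    apply: u0; first by move=> y; apply: continuous_comp; [exact: ch|exact: ck].
    by move=> i; apply/funext => a /=; rewrite hiP kiP.
  have e2 : id = h0 by apply: u0; [exact: id_cont | by []].
  by have := congr1 (fun H => H x) (etrans e1 (esym e2)).
split => [i|i|x] /=.
- split; first exact: ci.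
    by move=> a b eab; apply: (@sinj_inj I U i); rewrite -!hiP eab.
  move=> A oA; exists (h @^-1` (sinj U i @` A)); split.
    by move/continuousP: ch; apply; exact: sinj_open.
  apply/seteqP; split => [a Aa|a]; first by rewrite /= hiP; exists a.
  by rewrite /= hiP => -[b Ab /(@sinj_inj I U i) <-].
- rewrite (_ : range (iota i) = h @^-1` (range (sinj U i))).
    by move/continuousP: ch; apply; exact: sinj_open openT.
  apply/seteqP; split => [_ [a _ <-]|x [a _ ea]]; first by rewrite /= hiP; exists a.
  by exists a => //; rewrite -kiP ea hk.
- move: (hk x); case: (h x) => j a <-.
  by exists j; exists a => //; rewrite -kiP.
Qed.

Lemma singletonizable_op : singletonizable T_op.
Proof. by move=> X F _; exists (Sig (fam_obj F)), (sinj (fam_obj F)); exact: Sig_coproduct. Qed.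

Lemma singletonizable_nop : singletonizable T_nop.
Proof. by move=> X F _; exists (Sig (fam_obj F)), (sinj (fam_obj F)); exact: Sig_coproduct. Qed.

Lemma single_of_with (P : forall (X U : topologicalType), (U -> X) -> Prop) (T : topology_on_Top) :
  (forall X F, T X F -> single_with F (P X)) -> singleton_top T.
Proof. by move=> h X F /h [i0 [e _]]; exists i0. Qed.
Lemma catE (A : Type) (s1 s2 : seq A) : cat s1 s2 = List.app s1 s2.
Proof. by elim: s1 => //= x s ->. Qed.

Lemma mapE (A B : Type) (f : A -> B) (s : seq A) : map f s = List.map f s.
Proof. by elim: s => //= x s ->. Qed.

Definition pairs (J L : Type) (Ls : J -> seq L) (sJ : seq J) : seq (J * L) :=
  flatten [seq [seq (j, l) | l <- Ls j] | j <- sJ].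

Lemma in_pairs (J L : Type) (Ls : J -> seq L) (sJ : seq J) j l :
  List.In (j, l) (pairs Ls sJ) <-> List.In j sJ /\ List.In l (Ls j).
Proof.
rewrite /pairs; elim: sJ => [|j' s IH] /=; first by split => // -[].
rewrite ?catE List.in_app_iff IH ?mapE List.in_map_iff.
split.
- case.
  + by case=> l' [[-> ->] Hl]; split; [left|].
  + by case=> Hj Hl; split; [right|].
- case=> [[Ej|Hj] Hl].
  + by left; rewrite Ej; exists l; split.
  + by right; split.
Qed.

Lemma NoDup_pairs (J L : Type) (Ls : J -> seq L) (sJ : seq J) :
  List.NoDup sJ -> (forall j, List.NoDup (Ls j)) -> List.NoDup (pairs Ls sJ).
Proof.
move=> nd ndL; elim: sJ nd => [|j s IH] nd /=; first exact: List.NoDup_nil.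
move/List.NoDup_cons_iff: nd => [nj nds].
rewrite ?catE; apply: List.NoDup_app.
- rewrite ?mapE; apply: List.NoDup_map_NoDup_ForallPairs => //.
  by move=> a b _ _ [].
- exact: IH.
- move=> [j1 l1]; rewrite ?mapE List.in_map_iff => -[l' [[<- _] _]].
  by move=> /(in_pairs Ls s j l1) [].
Qed.

Lemma not_closure (T : topologicalType) (A : set T) (x : T) :
  ~ closure A x -> exists2 B, nbhs x B & forall y, B y -> ~ A y.
Proof.
move=> nc; apply: contrapT => nex; apply: nc => B nB.
apply: contrapT => ne; apply: nex; exists B => // y By Ay; apply: ne.
by exists y.
Qed.

Lemma nbhs_foldr (T : topologicalType) (J : Type) (M : J -> set T) (N : set T)
  (x : T) (s : seq J) :
  nbhs x N -> (forall j, nbhs x (M j)) -> nbhs x (foldr (fun j acc => M j `&` acc) N s).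
Proof. by move=> nN nM; elim: s => //= j s IH; apply: filterI. Qed.

Lemma foldr_sub1 (T : Type) (J : Type) (M : J -> set T) (N : set T) (s : seq J) :
  foldr (fun j acc => M j `&` acc) N s `<=` N.
Proof. by elim: s => //= j s IH y [_ /IH]. Qed.

Lemma foldr_subj (T : Type) (J : Type) (M : J -> set T) (N : set T) (s : seq J) j :
  List.In j s -> foldr (fun j acc => M j `&` acc) N s `<=` M j.
Proof.
elim: s => //= j' s IH [<-|Hj] y [My Fy] //.
exact: IH.
Qed.

Lemma numerable_comp (X U : topologicalType) (I K : Type) (V : I -> set X)
  (s : I -> X -> U) (O : K -> set U) :
  (forall i, {in V i, continuous (s i)}) ->
  numerable V -> numerable O ->
  numerable (fun ik : I * K => V ik.1 `&` s ik.1 @^-1` O ik.2).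
Proof.
move=> cs [J [phi [cphi bphi sphi lfphi sumphi]]] [L [psi [cpsi bpsi spsi lfpsi sumpsi]]].
have /choice [ci hci] := sphi.
have /choice [ck hck] := spsi.
pose Phi (jl : J * L) (x : X) : Rdefinitions.R :=
  phi jl.1 x * psi jl.2 (s (ci jl.1) x).
have suppPhi jl : [set x | Phi jl x != 0] `<=` [set x | phi jl.1 x != 0].
  by move=> x /=; rewrite /Phi mulf_eq0 negb_or => /andP[].
have clPhi jl : closure [set x | Phi jl x != 0] `<=` closure [set x | phi jl.1 x != 0].
  exact: closure_subset (suppPhi jl).
have keyC jl y : closure [set x | Phi jl x != 0] y ->
    V (ci jl.1) y /\ closure [set u | psi jl.2 u != 0] (s (ci jl.1) y).
  move=> cy; have Vy : V (ci jl.1) y by apply: hci; exact: clPhi.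
  split => // N nN.
  have cy' : {for y, continuous (s (ci jl.1))} by apply: cs; rewrite inE.
  have nN' : nbhs y (s (ci jl.1) @^-1` N) := cy' _ nN.
  have [z [Pz Nz]] := cy _ nN'.
  exists (s (ci jl.1) z); split => //.
  by move: Pz; rewrite /= /Phi mulf_eq0 negb_or => /andP[].
exists (J * L)%type, Phi; split.
- move=> [j l] x.
  case: (pselect (V (ci j) x)) => Vx.
  + have cx : {for x, continuous (s (ci j))} by apply: cs; rewrite inE.
    have cps : {for x, continuous (psi l \o s (ci j))}.
      by apply: continuous_comp; [exact: cx|exact: cpsi].
    exact: (@continuousM _ _ (phi j) (psi l \o s (ci j)) x (cphi j x) cps).
  + have ncl : ~ closure [set x | phi j x != 0] x by move/hci.
    have [B nB hB] := not_closure ncl.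
    have hB0 y : B y -> Phi (j, l) y = 0.
      move=> By; rewrite /Phi /=.
      have -> : phi j y = 0.
        by apply/eqP; apply: contrapT => /negP nz; exact: (hB y By nz).
      by rewrite mul0r.
    have Bx : B x := nbhs_singleton nB.
    move=> N; rewrite hB0 // => nN.
    by apply: filterS nB => y By /=; rewrite hB0 //; exact: nbhs_singleton nN.
- move=> [j l] x; rewrite /Phi /=.
  have /andP [p0 p1] := bphi j x; have /andP [q0 q1] := bpsi l (s (ci j) x).
  by rewrite mulr_ge0 //= mulr_ile1.
- move=> [j l]; exists (ci j, ck l) => y cy /=.
  have [Vy cly] := keyC (j, l) y cy.
  by split => //; exact: hck.
- move=> x.
  have [N [nN [sJ hsJ]]] := lfphi x.
  have /choice [ML hML] : forall j, exists p : set X * seq L, nbhs x p.1 /\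
      forall l, ~ List.In l p.2 -> p.1 `&` closure [set y | Phi (j, l) y != 0] = set0.
    move=> j; case: (pselect (V (ci j) x)) => Vx.
    + have [N' [nN' [sL hsL]]] := lfpsi (s (ci j) x).
      have cx : {for x, continuous (s (ci j))} by apply: cs; rewrite inE.
      exists (s (ci j) @^-1` N', sL); split; first exact: cx.
      move=> l nl; apply/seteqP; split => // y [/= N'y cy].
      have [_ cly] := keyC (j, l) y cy.
      have : (N' `&` closure [set u | psi l u != 0]) (s (ci j) y) by split.
      by rewrite hsL.
    + have ncl : ~ closure [set y | phi j y != 0] x by move/hci.
      exists (~` closure [set y | phi j y != 0], [::]); split.
        apply: open_nbhs_nbhs; split => //; apply: closed_openC; exact: closed_closure.
      move=> l _; apply/seteqP; split => // y [/= ny cy]; apply: ny; exact: clPhi cy.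
  exists (foldr (fun j acc => (ML j).1 `&` acc) N sJ); split.
    by apply: nbhs_foldr => // j; case: (hML j).
  exists (pairs (fun j => (ML j).2) sJ) => -[j l] njl.
  apply/seteqP; split => // y [Fy cy].
  case: (pselect (List.In j sJ)) => Hj.
  + have nl : ~ List.In l (ML j).2 by move=> Hl; apply: njl; apply/in_pairs.
    have [_ H] := hML j.
    have : ((ML j).1 `&` closure [set y | Phi (j, l) y != 0]) y.
      by split => //; exact: foldr_subj Fy.
    by rewrite H.
  + have : (N `&` closure [set y | phi j y != 0]) y.
      by split; [exact: foldr_sub1 Fy | exact: clPhi cy].
    by rewrite hsJ.
- move=> x.
  have [sx [ndx covx sumx]] := sumphi x.
  have /choice [Lx hLx] : forall j, exists t : seq L, [/\ List.NoDup t,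
      (forall l, psi l (s (ci j) x) != 0 -> List.In l t) &
      \sum_(l <- t) psi l (s (ci j) x) = 1] := fun j => sumpsi (s (ci j) x).
  exists (pairs Lx sx); split.
  + by apply: NoDup_pairs => // j; case: (hLx j).
  + move=> [j l]; rewrite /Phi /= mulf_eq0 negb_or => /andP [nj nl].
    apply/in_pairs; split; first exact: covx.
    by case: (hLx j) => _ + _; apply.
  + rewrite /pairs big_flatten /= big_map.
    rewrite -[RHS]sumx; apply: eq_bigr => j _.
    rewrite big_map /Phi /= -mulr_sumr.
    by case: (hLx j) => _ _ ->; rewrite mulr1.
Qed.

Lemma nop_of_ND (X Y : topologicalType) (pi : Y -> X) (I : Type) (V : I -> set X)
  (s : I -> X -> Y) : ND pi V s -> numerable V -> locally_split T_nop pi.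
Proof.
move=> nd nV; have [oV cV cs sK] := nd.
exists (famV V); split.
  split; first exact: famV_op.
  have -> : (fun i => range (fam_map (famV V) i)) = V.
    by apply/funext => i; exact: famV_range.
  exact: nV.
exists (fun i => s i \o set_val) => i; split; first exact: in_sv.
apply/funext => v /=; apply: sK; exact: set_valP.
Qed.

Lemma local_nop : local_top T_nop.
Proof.
move=> X Y U V pi g f q cpi cg pb uf lf ug lg.
split; first exact: all_universal.
have [cf cq e _] := pb.
move: lf => [F [[TF nF] [rf hrf]]].
move: lg => [G [[TG nG] [rg hrg]]].
have [sf [oF cF csf sfK]] := normalize_op TF hrf.
have [sg [oG cG csg sgK]] := normalize_op TG hrg.
apply: (@nop_of_ND _ _ pi (fam_idx G * fam_idx F)%type
   (fun ik => range (fam_map G ik.1) `&` sg ik.1 @^-1` range (fam_map F ik.2))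
   (fun ik => q \o sf ik.2 \o sg ik.1)).
- split.
  + move=> [i k]; exact: (proj1 (continuous_inP (sg i) (oG i)) (csg i) _ (oF k)).
  + move=> x; have [i Gi] := cG x; have [k Fk] := cF (sg i x); by exists (i, k).
  + move=> [i k] x; rewrite inE => -[Gx Fx].
    apply: continuous_comp; first by apply: csg; rewrite inE.
    by apply: continuous_comp; [apply: csf; rewrite inE | exact: cq].
  + move=> [i k] x [Gx Fx] /=.
    have := congr1 (fun H => H (sf k (sg i x))) e => /= <-.
    by rewrite sfK // sgK.
- exact: (numerable_comp csg nG nF).
Qed.
Theorem mainTheorem15 :
  subtop T_nop T_op /\
  (prec T_op T_slh /\ simtop T_op T_slh) /\
  (subtop T_slh T_sutsu /\ simtop T_slh T_sutsu) /\
  (subtop T_sutsu T_lsplit /\ simtop T_sutsu T_lsplit) /\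
  subtop T_lsplit T_sur /\
  (subtop T_sutsu T_sop /\ subtop T_sop T_sur) /\
  (forall T, List.In T [:: T_nop; T_op; T_slh; T_sutsu; T_sop; T_lsplit; T_sur] ->
     singleton_top T \/ singletonizable T) /\
  superextensive T_op /\
  (forall T, List.In T [:: T_nop; T_op; T_slh; T_sutsu; T_sop; T_lsplit] ->
     subcanonical T /\ local_top T).
Proof.
have pOS : prec T_op T_slh by move=> X Y pi _ _; exact: slh_of_op.
have pSO : prec T_slh T_op by move=> X Y pi _ _ h; apply: op_of_LS; exact: LS_of_slh h.
have pSSu : prec T_slh T_sutsu by move=> X Y pi _ _; exact: ls_sub sub_slh_sutsu.
have pSuS : prec T_sutsu T_slh.
  by move=> X Y pi _ _ h; apply: slh_of_LS; exact: LS_of_sutsu h.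
have pSuL : prec T_sutsu T_lsplit by move=> X Y pi _ _; exact: ls_sub sub_sutsu_lsplit.
have pLSu : prec T_lsplit T_sutsu.
  by move=> X Y pi _ _ h; apply: sutsu_of_LS; exact: LS_of_lsplit h.
have toSop : forall (X Y : topologicalType) (pi : Y -> X), LS pi -> locally_split T_sop pi.
  by move=> X Y pi h; apply: ls_sub sub_sutsu_sop _; exact: sutsu_of_LS.
split; first exact: sub_nop_op.
split; first by [].
split; first by split; [exact: sub_slh_sutsu|].
split; first by split; [exact: sub_sutsu_lsplit|].
split; first exact: sub_lsplit_sur.
split; first by split; [exact: sub_sutsu_sop|exact: sub_sop_sur].
split.
  move=> T /= [<-|[<-|[<-|[<-|[<-|[<-|[<-|[]]]]]]]].
  - by right; exact: singletonizable_nop.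
  - by right; exact: singletonizable_op.
  - by left; apply: (@single_of_with (fun X U f => Defs.surj f /\ local_homeo f)).
  - by left; apply: (@single_of_with (fun X U f => sutsu f)).
  - by left; apply: (@single_of_with (fun X U f =>
      [/\ continuous f, Defs.surj f & forall A : set U, open A -> open (f @` A)])).
  - by left; apply: (@single_of_with (fun X U f =>
      continuous f /\
      forall x : X, exists W : set X, [/\ open W, W x &
        exists sigma : X -> U, {within W, continuous sigma} /\
          forall x', W x' -> f (sigma x') = x'])).
  - by left; apply: (@single_of_with (fun X U f => continuous f /\ Defs.surj f)).
split; first exact: superext_op.
move=> T /= [<-|[<-|[<-|[<-|[<-|[<-|[]]]]]]]; split.
- apply: subcan_of => X Y pi _ h; apply: toSop; apply: LS_of_op.
  exact: ls_sub sub_nop_op h.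
- exact: local_nop.
- by apply: subcan_of => X Y pi _ h; apply: toSop; exact: LS_of_op.
- apply: local_of_LS; [exact: LS_of_op|by move=> X Y pi _; exact: op_of_LS].
- by apply: subcan_of => X Y pi _ h; apply: toSop; exact: LS_of_slh.
- apply: local_of_LS; [exact: LS_of_slh|by move=> X Y pi _; exact: slh_of_LS].
- by apply: subcan_of => X Y pi _ h; apply: toSop; exact: LS_of_sutsu.
- apply: local_of_LS; [exact: LS_of_sutsu|by move=> X Y pi _; exact: sutsu_of_LS].
- by apply: subcan_of.
- exact: local_sop.
- by apply: subcan_of => X Y pi _ h; apply: toSop; exact: LS_of_lsplit.
- apply: local_of_LS; [exact: LS_of_lsplit|exact: lsplit_of_LS].
Qed.
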